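(* Let $S$ be the power series in $x$ defined by $$S=\frac{5+9x-3\sqrt{(1+x)(1+9x)}}4,$$ i.e. the root of $S+1/S=(5+9x)/2$ with constant term $1/2$. Then $S$ has radius of convergence $1/9$ and admits an analytic continuation (still denoted $S$) to $\mathbb C\setminus[-1,-1/9]$. In this domain, $S$ never vanishes and $|S|<1$. *)

(* Defs.v *)
From Stdlib Require Import Reals.
From Coquelicot Require Import Coquelicot.
Open Scope R_scope.

(* a : nat -> R are the coefficients of the formal power series S with
   constant term 1/2 solving S + 1/S = (5+9x)/2, written (after multiplying
   by the invertible series S) as the coefficientwise identity
   S^2 - ((5+9x)/2) S + 1 = 0. *)
Definition is_S_coeffs (a : nat -> R) : Prop :=
  a 0%nat = 1/2 /\
  forall n : nat,
    sum_f_R0 (fun k => a k * a (n - k)%nat) n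
    - (5/2) * a n
    - (9/2) * (match n with O => 0 | S m => a m end)
    + (match n with O => 1 | S _ => 0 end) = 0.

Definition slit_domain (z : C) : Prop :=
  ~ (Im z = 0 /\ -1 <= Re z <= -1/9).

Definition holo_at (F : C -> C) (z : C) : Prop :=
  @ex_derive C_AbsRing C_NormedModule F z.

(* Main.v *)
Require Import Defs.
From Stdlib Require Import Reals Lra Lia Psatz.
From Coquelicot Require Import Coquelicot.
Open Scope R_scope.

Section Real.
Variable a : nat -> R.
Hypothesis Ha : is_S_coeffs a.

Lemma a0v : a 0%nat = 1/2.
Proof. apply Ha. Qed.

Lemma a1v : a 1%nat = -3/2.
Proof.
  destruct Ha as [H0 Hn]. specialize (Hn 1%nat). simpl in Hn.
  rewrite H0 in Hn. lra.
Qed.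

Lemma arec : forall m, a (S (S m)) =
  2/3 * sum_f_R0 (fun i => a (S i) * a (S (m - i))) m - 3 * a (S m).
Proof.
  intro m. destruct Ha as [H0 Hn]. specialize (Hn (S (S m))).
  rewrite decomp_sum in Hn by lia. simpl pred in Hn.
  simpl sum_f_R0 in Hn at 1.
  rewrite (sum_eq _ (fun i => a (S i) * a (S (m - i))) m) in Hn.
  2:{ intros i Hi. destruct i; f_equal; f_equal; lia. }
  rewrite Nat.sub_diag in Hn.
  rewrite Nat.sub_0_r, H0 in Hn. lra.
Qed.

Definition b n := Rabs (a n).

Lemma brec : forall m, b (S (S m)) <=
  2/3 * sum_f_R0 (fun i => b (S i) * b (S (m - i))) m + 3 * b (S m).
Proof.
  intro m. unfold b. rewrite arec. unfold Rminus.
  eapply Rle_trans. apply Rabs_triang. rewrite Rabs_Ropp, !Rabs_mult.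
  rewrite (Rabs_right (2/3)) by lra. rewrite (Rabs_right 3) by lra.
  apply Rplus_le_compat_r. apply Rmult_le_compat_l. lra.
  eapply Rle_trans. apply sum_f_R0_triangle.
  right. apply sum_eq. intros. apply Rabs_mult.
Qed.

Lemma b_nonneg : forall n, 0 <= b n.
Proof. intro; apply Rabs_pos. Qed.

Lemma sum_scal_l (g : nat -> R) c N : sum_f_R0 (fun k => c * g k) N = c * sum_f_R0 g N.
Proof. induction N; simpl. ring. rewrite IHN. ring. Qed.

Section X.
Variable x : R.
Hypothesis x0 : 0 <= x.
Hypothesis x19 : x <= 1/9.

Definition f k := b (S k) * x ^ (S k).
Definition V N := sum_f_R0 f N.

Lemma f_nonneg k : 0 <= f k.
Proof. unfold f. apply Rmult_le_pos. apply b_nonneg. apply pow_le. lra. Qed.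

Lemma conv_le N : sum_f_R0 (fun k => sum_f_R0 (fun p => f p * f (k - p)%nat) k) N <= V N * V N.
Proof.
  destruct N as [|N].
  - simpl. unfold V. simpl. lra.
  - unfold V. rewrite cauchy_finite by lia.
    assert (0 <= sum_f_R0
     (fun k : nat =>
      sum_f_R0 (fun l : nat => f (S (l + k)) * f (S N - l)%nat)
        (Init.Nat.pred (S N - k))) (Init.Nat.pred (S N))).
    { apply cond_pos_sum. intro. apply cond_pos_sum. intro.
      apply Rmult_le_pos; apply f_nonneg. }
    lra.
Qed.

Lemma fS k : f (S k) <= 2/3 * sum_f_R0 (fun p => f p * f (k - p)%nat) k + 3 * x * f k.
Proof.
  unfold f at 1. eapply Rle_trans.
  apply Rmult_le_compat_r. apply pow_le; lra. apply brec.
  rewrite Rmult_plus_distr_r. apply Rplus_le_compat.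
  - rewrite Rmult_assoc. apply Rmult_le_compat_l. lra.
    rewrite Rmult_comm, scal_sum. right. apply sum_eq. intros i Hi.
    unfold f. replace (S (S k)) with (S i + S (k - i))%nat by lia.
    rewrite pow_add. ring.
  - unfold f. simpl. right. ring.
Qed.

Lemma V0 : V 0 = 3/2 * x.
Proof. unfold V, f. simpl. unfold b. rewrite a1v. rewrite Rabs_left by lra. field. Qed.

Lemma VS N : V (S N) <= 3/2 * x + 2/3 * (V N * V N) + 3 * x * V N.
Proof.
  unfold V at 1. rewrite decomp_sum by lia. simpl pred.
  fold (V 0) in *. 
  assert (H0 : f 0%nat = 3/2 * x) by (rewrite <- V0; reflexivity).
  rewrite H0.
  assert (sum_f_R0 (fun i => f (S i)) N <=
     sum_f_R0 (fun k => 2/3 * sum_f_R0 (fun p => f p * f (k - p)%nat) k + 3 * x * f k) N).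
  { apply sum_Rle. intros. apply fS. }
  rewrite plus_sum, !sum_scal_l in H. fold (V N) in H.
  pose proof (conv_le N). nra.
Qed.

Lemma V_nonneg N : 0 <= V N.
Proof. apply cond_pos_sum. apply f_nonneg. Qed.

Lemma V_bound N : V N <= 1/6 + 3 * x.
Proof.
  induction N.
  - rewrite V0. lra.
  - pose proof (VS N). pose proof (V_nonneg N). nra.
Qed.

Lemma partial_bound N : sum_f_R0 (fun n => b n * x ^ n) N <= 2/3 + 3 * x.
Proof.
  destruct N. simpl. unfold b. rewrite a0v, Rabs_right by lra. lra.
  rewrite decomp_sum by lia. simpl pred.
  replace (sum_f_R0 (fun i : nat => b (S i) * x ^ S i) N) with (V N) by reflexivity.
  pose proof (V_bound N). simpl. unfold b at 1. rewrite a0v, Rabs_right by lra. lra.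
Qed.

End X.
End Real.

Lemma is_series_zero : is_series (fun _ : nat => 0) 0.
Proof.
  assert (H : is_lim_seq (sum_n (fun _ : nat => 0)) 0).
  { apply (is_lim_seq_ext (fun _ => 0)). 2: apply is_lim_seq_const.
    intro n. rewrite sum_n_Reals. induction n; simpl; [|rewrite <- IHn]; ring. }
  exact H.
Qed.

Lemma shift_series (p : nat -> R) G : is_series p G ->
  is_series (fun n => match n with O => 0 | S m => p m end) G.
Proof.
  intro H. apply is_series_decr_1. simpl.
  match goal with |- is_series _ ?L => replace L with G end. exact H.
  change (G = Rplus G (Ropp 0)); rewrite Ropp_0, Rplus_0_r; reflexivity.
Qed.

Lemma delta_series : is_series (fun n : nat => match n with O => 1 | S _ => 0 end) 1.
Proof.
  apply is_series_decr_1. simpl.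
  match goal with |- is_series _ ?L => replace L with 0 end. exact is_series_zero.
  change (0 = Rplus 1 (Ropp 1)); rewrite Rplus_opp_r; reflexivity.
Qed.

Section Rad.
Variable a : nat -> R.
Hypothesis Ha : is_S_coeffs a.

Lemma ex_series_b x : 0 <= x -> x <= 1/9 -> ex_series (fun n => b a n * x ^ n).
Proof.
  intros H0 H1.
  destruct (ex_finite_lim_seq_incr (sum_n (fun n => b a n * x ^ n)) (2/3 + 3*x)) as [l Hl].
  - intro n. rewrite !sum_n_Reals.
    change (sum_f_R0 ?g (S n)) with (sum_f_R0 g n + g (S n)).
    assert (0 <= b a (S n) * x ^ S n) by (apply Rmult_le_pos; [apply b_nonneg|apply pow_le; lra]).
    lra.
  - intro n. rewrite sum_n_Reals. apply partial_bound; auto.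
  - exists l. exact Hl.
Qed.

Lemma CV_disk_19 : CV_disk a (1/9).
Proof.
  unfold CV_disk. eapply ex_series_ext. 2: apply (ex_series_b (1/9)); lra.
  intro n. simpl. unfold b. rewrite Rabs_mult, (Rabs_right ((1/9)^n)). reflexivity.
  apply Rle_ge, pow_le. lra.
Qed.

Lemma CV_disk_ub r : CV_disk a r -> r <= 1/9.
Proof.
  intro Hr. destruct (Rle_lt_dec r (1/9)) as [|Hlt]; auto. exfalso.
  set (m := Rmin r (1/2)).
  assert (Hm1 : 1/9 < m) by (unfold m; apply Rmin_glb_lt; lra).
  assert (Hm2 : m <= r) by apply Rmin_l.
  assert (Hm3 : m <= 1/2) by apply Rmin_r.
  set (x := - (1/9 + m)/2).
  assert (Hx : CV_disk a x).
  { apply (CV_disk_le _ _ r); auto. rewrite (Rabs_left1 x) by (unfold x; lra). rewrite (Rabs_right r) by lra. unfold x; lra. }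
  set (p := fun n => a n * x ^ n).
  assert (Hp : ex_series p) by (apply ex_series_Rabs; exact Hx).
  destruct Hp as [G HG].
  pose proof (is_series_mult p p G G HG HG Hx Hx) as HM.
  pose proof (shift_series p G HG) as Hq.
  set (q := fun n : nat => match n with O => 0 | S m => p m end) in Hq.
  assert (HE : is_series (fun n => sum_f_R0 (fun k => p k * p (n - k)%nat) n
             - 5/2 * p n - 9/2 * x * q n) (G*G - 5/2 * G - 9/2 * x * G)).
  { apply (is_series_minus _ _ _ _ (is_series_minus _ _ _ _ HM (is_series_scal (5/2) _ _ HG))
       (is_series_scal (9/2 * x) _ _ Hq)). }
  assert (Hd : is_series (fun n : nat => match n with O => 1 | S _ => 0 end) (- (G*G - 5/2 * G - 9/2 * x * G))).
  { apply is_series_opp in HE. eapply is_series_ext. 2: exact HE.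
    intro n. destruct Ha as [_ Hn]. specialize (Hn n).
    unfold opp; simpl. unfold opp; simpl.
    assert (sum_f_R0 (fun k => p k * p (n - k)%nat) n = x ^ n * sum_f_R0 (fun k => a k * a (n - k)%nat) n).
    { rewrite scal_sum. apply sum_eq. intros i Hi. unfold p.
      assert (E : x ^ n = x ^ i * x ^ (n - i)) by (rewrite <- pow_add; f_equal; lia).
      rewrite E. ring. }
    rewrite H. unfold q, p. destruct n; simpl in *; nra. }
  pose proof delta_series as Hd1.
  apply is_series_unique in Hd. apply is_series_unique in Hd1.
  rewrite Hd in Hd1. change (-(G*G - 5/2*G - 9/2*x*G) = 1) in Hd1.
  assert (-1 < x < -1/9) by (unfold x; lra).
  assert (HH : exists g : R, -(g*g - 5/2*g - 9/2*x*g) = 1) by (exists G; exact Hd1).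
  destruct HH as [g Hg]. clearbody x. clear - Hg H.
  assert (0 < 1 - ((5+9*x)/2)^2/4) by nra.
  pose proof (pow2_ge_0 (g - (5+9*x)/4)).
  nra.
Qed.

Lemma radius : CV_radius a = Finite (1/9).
Proof.
  apply is_lub_Rbar_unique. split.
  - intros r Hr. simpl. apply CV_disk_ub; auto.
  - intros l Hl. apply Hl. apply CV_disk_19.
Qed.
End Rad.

From Stdlib Require Import ClassicalEpsilon.

Lemma C_eq (p q : C) : Re p = Re q -> Im p = Im q -> p = q.
Proof. destruct p, q; simpl; intros; subst; reflexivity. Qed.

Lemma Cmult_integral (x y : C) : (x * y = 0)%C -> x = 0 \/ y = 0.
Proof.
  intro H. assert (Cmod x * Cmod y = 0) by (rewrite <- Cmod_mult, H; apply Cmod_0).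
  apply Rmult_integral in H0. destruct H0; [left|right]; apply Cmod_eq_0; auto.
Qed.

Lemma im_le_Cmod (w : C) : Rabs (Im w) <= Cmod w.
Proof.
  pose proof (Cmod2_alt w). pose proof (Cmod_ge_0 w).
  apply Rabs_le. split; nra.
Qed.

Lemma re_le_Cmod' (w : C) : Rabs (Re w) <= Cmod w.
Proof. apply re_le_Cmod. Qed.

Definition U (z : C) : C := ((RtoC 5 + RtoC 9 * z) / RtoC 2)%C.
Definition RootP (z w : C) : Prop := (w * w - U z * w + 1 = 0)%C /\ Cmod w < 1.

Lemma root_unique z w1 w2 : RootP z w1 -> RootP z w2 -> w1 = w2.
Proof.
  intros [H1 L1] [H2 L2].
  assert (E : ((w1 - w2) * (w1 + w2 - U z) = 0)%C).
  { replace ((w1 - w2) * (w1 + w2 - U z))%C with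
      ((w1*w1 - U z*w1 + 1) - (w2*w2 - U z*w2 + 1))%C by ring.
    rewrite H1, H2. ring. }
  apply Cmult_integral in E. destruct E as [E|E].
  - replace w1 with ((w1 - w2) + w2)%C by ring. rewrite E. ring.
  - exfalso. assert (E2 : (w1 * w2 = 1)%C).
    { replace (w1 * w2)%C with (1 - ((w1*w1 - U z*w1 + 1) + w1 * (U z - (w1 + w2)) - (w1 + w2 - U z) * 0))%C by ring.
      rewrite H1. replace (U z - (w1 + w2))%C with (- (w1 + w2 - U z))%C by ring.
      rewrite E. ring. }
    apply (f_equal Cmod) in E2. rewrite Cmod_mult, Cmod_1 in E2.
    pose proof (Cmod_ge_0 w1). pose proof (Cmod_ge_0 w2). nra.
Qed.

Lemma Csqrt_ex (v : C) : exists s : C, (s * s = v)%C.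
Proof.
  destruct v as [p q].
  set (m := sqrt (p*p + q*q)).
  assert (Hm0 : 0 <= m) by apply sqrt_pos.
  assert (Hmm : m * m = p*p + q*q) by (apply sqrt_sqrt; nra).
  assert (Hmp : -m <= p <= m) by (split; nra).
  set (A := (m + p)/2). set (B := (m - p)/2).
  assert (HA : 0 <= A) by (unfold A; lra). assert (HB : 0 <= B) by (unfold B; lra).
  pose proof (sqrt_sqrt A HA) as HsA. pose proof (sqrt_sqrt B HB) as HsB.
  pose proof (sqrt_pos A). pose proof (sqrt_pos B).
  assert (Hprod : (sqrt A * sqrt B)² = (Rabs q / 2)²).
  { unfold Rsqr. replace (Rabs q / 2 * (Rabs q / 2)) with (Rabs q * Rabs q / 4) by field.
    rewrite <- Rabs_mult, Rabs_right by nra.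
    replace (sqrt A * sqrt B * (sqrt A * sqrt B)) with ((sqrt A * sqrt A) * (sqrt B * sqrt B)) by ring.
    rewrite HsA, HsB. unfold A, B. nra. }
  apply Rsqr_inj in Hprod; [| nra | pose proof (Rabs_pos q); lra].
  destruct (Rle_lt_dec 0 q) as [Hq|Hq].
  - rewrite Rabs_right in Hprod by lra.
    exists (sqrt A, sqrt B). apply C_eq; simpl.
    + unfold A, B in *. nra.
    + nra.
  - rewrite Rabs_left in Hprod by lra.
    exists (sqrt A, - sqrt B). apply C_eq; simpl.
    + unfold A, B in *. nra.
    + nra.
Qed.

Lemma unit_root_not_slit z w : (w * w - U z * w + 1 = 0)%C -> Cmod w = 1 -> ~ slit_domain z.
Proof.
  intros H Hw Hs. apply Hs.
  assert (Hc : (w * Cconj w = 1)%C).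
  { rewrite <- Cmod2_conj, Hw. apply C_eq; simpl; ring. }
  assert (E : (w - U z + Cconj w = 0)%C).
  { replace (w - U z + Cconj w)%C with
      ((w * w - U z * w + 1) * Cconj w + (w - U z) * (1 - w * Cconj w))%C by ring.
    rewrite H, Hc. ring. }
  pose proof (Cmod2_alt w) as Hw2. rewrite Hw in Hw2.
  destruct w as [c d]. destruct z as [x y]. simpl in *.
  pose proof (f_equal Re E) as ER. pose proof (f_equal Im E) as EI.
  unfold U in ER, EI. simpl in ER, EI.
  assert (Hy : y = 0) by (field_simplify in EI; nra).
  subst y. split. reflexivity.
  field_simplify in ER. split; nra.
Qed.

Lemma root_exists z : slit_domain z -> exists w, RootP z w.
Proof.
  intro Hs.
  destruct (Csqrt_ex (U z * U z - RtoC 4)%C) as [s Hs2].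
  set (w1 := ((U z + s) / RtoC 2)%C). set (w2 := ((U z - s) / RtoC 2)%C).
  assert (E1 : (w1 * w1 - U z * w1 + 1 = 0)%C).
  { unfold w1. replace (((U z + s) / RtoC 2) * ((U z + s) / RtoC 2) - U z * ((U z + s) / RtoC 2) + 1)%C
      with ((s * s - (U z * U z - RtoC 4)) / RtoC 4)%C by field.
    rewrite Hs2. field. }
  assert (E2 : (w2 * w2 - U z * w2 + 1 = 0)%C).
  { unfold w2. replace (((U z - s) / RtoC 2) * ((U z - s) / RtoC 2) - U z * ((U z - s) / RtoC 2) + 1)%C
      with ((s * s - (U z * U z - RtoC 4)) / RtoC 4)%C by field.
    rewrite Hs2. field. }
  assert (E12 : (w1 * w2 = 1)%C).
  { unfold w1, w2. replace (((U z + s) / RtoC 2) * ((U z - s) / RtoC 2))%C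
      with (1 - (s * s - (U z * U z - RtoC 4)) / RtoC 4)%C by field.
    rewrite Hs2. field. }
  apply (f_equal Cmod) in E12. rewrite Cmod_mult, Cmod_1 in E12.
  destruct (Rlt_le_dec (Cmod w1) 1) as [L1|L1].
  { exists w1; split; auto. }
  destruct (Rlt_le_dec (Cmod w2) 1) as [L2|L2].
  { exists w2; split; auto. }
  exfalso. pose proof (Cmod_ge_0 w1). pose proof (Cmod_ge_0 w2).
  assert (Cmod w1 = 1) by nra.
  exact (unit_root_not_slit z w1 E1 H1 Hs).
Qed.

Definition Fdef (z : C) : C := epsilon (inhabits (RtoC 0)) (RootP z).

Lemma F_root z : (exists w, RootP z w) -> RootP z (Fdef z).
Proof. intro H. unfold Fdef. apply epsilon_spec. exact H. Qed.

Lemma pow_n_Cpow (z : C) n : pow_n z n = Cpow z n.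
Proof. induction n. reflexivity. simpl. rewrite IHn. reflexivity. Qed.

Lemma Cpow_add' (z : C) i j : Cpow z (i + j) = (Cpow z i * Cpow z j)%C.
Proof. induction i; simpl. ring. rewrite IHi. ring. Qed.

Lemma Re_mult (u v : C) : Re (u * v)%C = Re u * Re v - Im u * Im v.
Proof. destruct u, v; reflexivity. Qed.
Lemma Im_mult (u v : C) : Im (u * v)%C = Re u * Im v + Im u * Re v.
Proof. destruct u, v; reflexivity. Qed.

Lemma series_C (p : nat -> C) (R S : R) :
  is_series (fun n => Re (p n)) R -> is_series (fun n => Im (p n)) S ->
  @is_series C_AbsRing C_NormedModule p (R, S).
Proof.
  intros HR HS.
  assert (Hc : forall N, sum_n p N = (sum_n (fun n => Re (p n)) N, sum_n (fun n => Im (p n)) N)).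
  { induction N.
    - rewrite !sum_O. destruct (p 0%nat); reflexivity.
    - unfold sum_n in *. rewrite !sum_n_Sm by lia. rewrite IHN. reflexivity. }
  unfold is_series. apply filterlim_locally. intro eps.
  pose proof (proj1 (filterlim_locally _ _) HR eps) as HR'.
  pose proof (proj1 (filterlim_locally _ _) HS eps) as HS'.
  generalize (filter_and _ _ HR' HS'). apply filter_imp.
  intros N [H1 H2]. rewrite Hc. split; assumption.
Qed.

Lemma sum_n_re (p : nat -> C) N : Re (sum_n p N) = sum_n (fun n => Re (p n)) N.
Proof.
  induction N. rewrite !sum_O. reflexivity.
  unfold sum_n in *. rewrite !sum_n_Sm by lia. simpl. rewrite <- IHN. reflexivity.
Qed.
Lemma sum_n_im (p : nat -> C) N : Im (sum_n p N) = sum_n (fun n => Im (p n)) N.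
Proof.
  induction N. rewrite !sum_O. reflexivity.
  unfold sum_n in *. rewrite !sum_n_Sm by lia. simpl. rewrite <- IHN. reflexivity.
Qed.

Section Cx.
Variable a : nat -> R.
Hypothesis Ha : is_S_coeffs a.
Variable z : C.
Hypothesis Hz : Cmod z < 1/9.

Let x := Cmod z.
Let rr n := Re (Cpow z n) * a n.
Let ss n := Im (Cpow z n) * a n.

Lemma rr_bound n : Rabs (rr n) <= b a n * x ^ n.
Proof.
  unfold rr, b, x. rewrite Rabs_mult, <- Cmod_pow, Rmult_comm.
  apply Rmult_le_compat_l. apply Rabs_pos. apply re_le_Cmod.
Qed.
Lemma ss_bound n : Rabs (ss n) <= b a n * x ^ n.
Proof.
  unfold ss, b, x. rewrite Rabs_mult, <- Cmod_pow, Rmult_comm.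
  apply Rmult_le_compat_l. apply Rabs_pos. apply im_le_Cmod.
Qed.

Lemma ex_abs_rr : ex_series (fun n => Rabs (rr n)).
Proof.
  apply (@ex_series_le R_AbsRing R_CompleteNormedModule _ (fun n => b a n * x ^ n)).
  - intro n. change (Rabs (Rabs (rr n)) <= b a n * x ^ n). rewrite Rabs_Rabsolu. apply rr_bound.
  - apply ex_series_b; auto. apply Cmod_ge_0. unfold x; lra.
Qed.
Lemma ex_abs_ss : ex_series (fun n => Rabs (ss n)).
Proof.
  apply (@ex_series_le R_AbsRing R_CompleteNormedModule _ (fun n => b a n * x ^ n)).
  - intro n. change (Rabs (Rabs (ss n)) <= b a n * x ^ n). rewrite Rabs_Rabsolu. apply ss_bound.
  - apply ex_series_b; auto. apply Cmod_ge_0. unfold x; lra.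
Qed.

Lemma conv_split n :
  sum_f_R0 (fun k => rr k * rr (n - k)%nat) n - sum_f_R0 (fun k => ss k * ss (n - k)%nat) n
  = Re (Cpow z n) * sum_f_R0 (fun k => a k * a (n - k)%nat) n /\
  sum_f_R0 (fun k => rr k * ss (n - k)%nat) n + sum_f_R0 (fun k => ss k * rr (n - k)%nat) n
  = Im (Cpow z n) * sum_f_R0 (fun k => a k * a (n - k)%nat) n.
Proof.
  split.
  - rewrite <- minus_sum, scal_sum. apply sum_eq. intros i Hi.
    assert (E : Cpow z n = (Cpow z i * Cpow z (n - i))%C) by (rewrite <- Cpow_add'; f_equal; lia).
    rewrite E, Re_mult.
    unfold rr, ss. ring.
  - rewrite <- plus_sum, scal_sum. apply sum_eq. intros i Hi.
    assert (E : Cpow z n = (Cpow z i * Cpow z (n - i))%C) by (rewrite <- Cpow_add'; f_equal; lia).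
    rewrite E, Im_mult.
    unfold rr, ss. ring.
Qed.

Lemma series_eqs : exists Rr Sr : R, is_series rr Rr /\ is_series ss Sr /\
  Rr*Rr - Sr*Sr - 5/2 * Rr - 9/2 * (Re z * Rr - Im z * Sr) = -1 /\
  (Rr*Sr + Sr*Rr) - 5/2 * Sr - 9/2 * (Re z * Sr + Im z * Rr) = 0.
Proof.
  destruct (ex_series_Rabs _ ex_abs_rr) as [Rr HR].
  destruct (ex_series_Rabs _ ex_abs_ss) as [Sr HS].
  exists Rr, Sr. split; [exact HR|]. split; [exact HS|].
  pose proof (is_series_mult rr rr Rr Rr HR HR ex_abs_rr ex_abs_rr) as Mrr.
  pose proof (is_series_mult ss ss Sr Sr HS HS ex_abs_ss ex_abs_ss) as Mss.
  pose proof (is_series_mult rr ss Rr Sr HR HS ex_abs_rr ex_abs_ss) as Mrs.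
  pose proof (is_series_mult ss rr Sr Rr HS HR ex_abs_ss ex_abs_rr) as Msr.
  pose proof (shift_series rr Rr HR) as Qr.
  pose proof (shift_series ss Sr HS) as Qs.
  set (qr := fun n : nat => match n with O => 0 | S m => rr m end) in Qr.
  set (qs := fun n : nat => match n with O => 0 | S m => ss m end) in Qs.
  set (zr := Re z). set (zi := Im z).
  split.
  - assert (HE : is_series (fun n => (sum_f_R0 (fun k => rr k * rr (n - k)%nat) n
                - sum_f_R0 (fun k => ss k * ss (n - k)%nat) n)
             - 5/2 * rr n - 9/2 * (zr * qr n - zi * qs n))
           (Rr*Rr - Sr*Sr - 5/2 * Rr - 9/2 * (zr * Rr - zi * Sr))).
    { apply (is_series_minus _ _ _ _ (is_series_minus _ _ _ _ (is_series_minus _ _ _ _ Mrr Mss)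
          (is_series_scal (5/2) _ _ HR))).
      apply (is_series_scal (9/2) (fun n => zr * qr n - zi * qs n) (zr*Rr - zi*Sr)).
      apply (is_series_minus _ _ _ _ (is_series_scal zr _ _ Qr) (is_series_scal zi _ _ Qs)). }
    assert (Hd : is_series (fun n : nat => match n with O => 1 | S _ => 0 end)
                   (- (Rr*Rr - Sr*Sr - 5/2 * Rr - 9/2 * (zr * Rr - zi * Sr)))).
    { apply is_series_opp in HE. eapply is_series_ext. 2: exact HE.
      intro n. destruct Ha as [_ Hn]. specialize (Hn n).
      unfold opp; simpl. unfold opp; simpl.
      rewrite (proj1 (conv_split n)).
      destruct n.
      + simpl in *. unfold qr, qs, rr, ss in *. simpl. nra.
      + unfold qr, qs, rr, ss, zr, zi in *. simpl Cpow. rewrite ?Re_mult, ?Im_mult.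
        assert (E : sum_f_R0 (fun k => a k * a (S n - k)%nat) (S n) =
          5/2 * a (S n) + 9/2 * a n) by lra.
        rewrite E. ring. }
    pose proof delta_series as Hd1.
    apply is_series_unique in Hd. apply is_series_unique in Hd1.
    rewrite Hd in Hd1. lra.
  - assert (HE : is_series (fun n => (sum_f_R0 (fun k => rr k * ss (n - k)%nat) n
                + sum_f_R0 (fun k => ss k * rr (n - k)%nat) n)
             - 5/2 * ss n - 9/2 * (zr * qs n + zi * qr n))
           ((Rr*Sr + Sr*Rr) - 5/2 * Sr - 9/2 * (zr * Sr + zi * Rr))).
    { apply (is_series_minus _ _ _ _ (is_series_minus _ _ _ _ (is_series_plus _ _ _ _ Mrs Msr)
          (is_series_scal (5/2) _ _ HS))).
      apply (is_series_scal (9/2) (fun n => zr * qs n + zi * qr n) (zr*Sr + zi*Rr)).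
      apply (is_series_plus _ _ _ _ (is_series_scal zr _ _ Qs) (is_series_scal zi _ _ Qr)). }
    assert (Hd : is_series (fun _ : nat => 0)
                   ((Rr*Sr + Sr*Rr) - 5/2 * Sr - 9/2 * (zr * Sr + zi * Rr))).
    { eapply is_series_ext. 2: exact HE.
      intro n. destruct Ha as [_ Hn]. specialize (Hn n).
      rewrite (proj2 (conv_split n)).
      destruct n.
      + simpl in *. unfold qr, qs, rr, ss in *. simpl. nra.
      + unfold qr, qs, rr, ss, zr, zi in *. simpl Cpow. rewrite ?Re_mult, ?Im_mult.
        assert (E : sum_f_R0 (fun k => a k * a (S n - k)%nat) (S n) =
          5/2 * a (S n) + 9/2 * a n) by lra.
        rewrite E. match goal with |- ?l = _ => change (l = 0%R) end. ring. }
    pose proof is_series_zero as Hd1.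
    apply is_series_unique in Hd. apply is_series_unique in Hd1.
    rewrite Hd in Hd1. lra.
Qed.

End Cx.

Lemma U_eq z : U z = (5/2 + 9/2 * Re z, 9/2 * Im z).
Proof. destruct z as [p q]. apply C_eq; unfold U; simpl; field. Qed.

Lemma series_F (a : nat -> R) (Ha : is_S_coeffs a) (z : C) (Hz : Cmod z < 1/9) :
  @is_pseries C_AbsRing C_NormedModule (fun n => RtoC (a n)) z (Fdef z).
Proof.
  destruct (series_eqs a Ha z Hz) as [Rr [Sr [HR [HS [E1 E2]]]]].
  set (p := fun k => @scal C_AbsRing C_NormedModule (pow_n z k) (RtoC (a k))).
  assert (Hre : forall n, Re (p n) = Re (Cpow z n) * a n).
  { intro n. unfold p. rewrite pow_n_Cpow. change (Re (Cpow z n * RtoC (a n))%C = Re (Cpow z n) * a n).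
    rewrite Re_mult. simpl. ring. }
  assert (Him : forall n, Im (p n) = Im (Cpow z n) * a n).
  { intro n. unfold p. rewrite pow_n_Cpow. change (Im (Cpow z n * RtoC (a n))%C = Im (Cpow z n) * a n).
    rewrite Im_mult. simpl. ring. }
  assert (HR' : is_series (fun n => Re (p n)) Rr).
  { eapply is_series_ext. 2: exact HR. intro n. rewrite Hre. reflexivity. }
  assert (HS' : is_series (fun n => Im (p n)) Sr).
  { eapply is_series_ext. 2: exact HS. intro n. rewrite Him. reflexivity. }
  assert (Hser : @is_series C_AbsRing C_NormedModule p (Rr, Sr)) by (apply series_C; auto).
  set (x := Cmod z).
  assert (Hx0 : 0 <= x) by apply Cmod_ge_0.
  assert (Hbound : forall N, Cmod (sum_n p N) <= 2/3 + 3 * x).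
  { intro N. change (Cmod (sum_n p N)) with (@norm C_AbsRing C_NormedModule (sum_n p N)). eapply Rle_trans. unfold sum_n. apply (@norm_sum_n_m C_AbsRing C_NormedModule).
    assert (Hn : forall n, norm (p n) = b a n * x ^ n).
    { intro n. change (@norm C_AbsRing C_NormedModule (p n)) with (Cmod (p n)). unfold p. rewrite pow_n_Cpow.
      change (Cmod (Cpow z n * RtoC (a n))%C = b a n * x ^ n).
      rewrite Cmod_mult, Cmod_pow, Cmod_R. unfold b, x. ring. }
    change (sum_n (fun n => norm (p n)) N <= 2/3 + 3 * x).
    rewrite (sum_n_ext _ (fun n => b a n * x ^ n)) by apply Hn.
    rewrite sum_n_Reals. apply partial_bound; auto. unfold x; lra. }
  assert (Hsq : Rr * Rr + Sr * Sr <= (2/3 + 3*x) * (2/3 + 3*x)).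
  { assert (L : is_lim_seq (fun N => sum_n (fun n => Re (p n)) N * sum_n (fun n => Re (p n)) N
                 + sum_n (fun n => Im (p n)) N * sum_n (fun n => Im (p n)) N)
                 (Rr * Rr + Sr * Sr)).
    { apply is_lim_seq_plus'; apply is_lim_seq_mult'; assumption. }
    assert (Rbar_le (Rr * Rr + Sr * Sr) ((2/3 + 3*x) * (2/3 + 3*x))).
    { eapply is_lim_seq_le. 2: exact L. 2: apply is_lim_seq_const.
      intro N. cbv beta. rewrite <- (sum_n_re p N), <- (sum_n_im p N).
      assert (Hw : forall w : C, Cmod w <= 2/3 + 3*x -> Re w * Re w + Im w * Im w <= (2/3 + 3*x) * (2/3 + 3*x)).
      { intros w Hw. pose proof (Cmod2_alt w). pose proof (Cmod_ge_0 w). nra. }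
      apply Hw. apply Hbound. }
    exact H. }
  assert (HG : RootP z (Rr, Sr)).
  { split.
    - apply C_eq; rewrite U_eq; simpl; nra.
    - pose proof (Cmod2_alt (Rr, Sr)). pose proof (Cmod_ge_0 (Rr, Sr)). simpl in H.
      unfold x in *. nra. }
  assert (HF : RootP z (Fdef z)) by (apply F_root; exists (Rr, Sr); exact HG).
  rewrite (root_unique z (Fdef z) (Rr, Sr) HF HG).
  exact Hser.
Qed.

Lemma slit_open z : slit_domain z -> exists d, 0 < d /\ forall y, Cmod (y - z) < d -> slit_domain y.
Proof.
  intro Hs. destruct z as [p q]. unfold slit_domain in *. simpl in Hs.
  destruct (Req_dec q 0) as [Hq|Hq].
  - subst q. assert (Hp : p < -1 \/ -1/9 < p) by (destruct (Rlt_le_dec p (-1)); [left; lra|];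
      destruct (Rle_lt_dec p (-1/9)); [exfalso; apply Hs; split; [reflexivity|lra] | right; lra]).
    destruct Hp as [Hp|Hp].
    + exists (-1 - p). split. lra. intros y Hy [Hy1 Hy2].
      pose proof (re_le_Cmod (y - (p, 0))%C). destruct y as [u v]. simpl in *.
      apply Rabs_le_between in H. lra.
    + exists (p + 1/9). split. lra. intros y Hy [Hy1 Hy2].
      pose proof (re_le_Cmod (y - (p, 0))%C). destruct y as [u v]. simpl in *.
      apply Rabs_le_between in H. lra.
  - exists (Rabs q). split. apply Rabs_pos_lt; auto.
    intros y Hy [Hy1 Hy2].
    pose proof (im_le_Cmod (y - (p, q))%C). destruct y as [u v]. simpl in *. subst v.
    replace (0 + - q) with (- q) in H by ring. rewrite Rabs_Ropp in H. lra.
Qed.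

Lemma Cmod_sub1 (u : C) : 1 - Cmod u <= Cmod (u - 1).
Proof.
  assert (E : (u + - (u - 1))%C = 1%C) by ring.
  pose proof (Cmod_triangle u (- (u - 1))%C). rewrite E, Cmod_opp, Cmod_1 in H. lra.
Qed.

Definition lder (w : C) : C := (RtoC 9 * w * w / (RtoC 2 * (w * w - 1)))%C.

Lemma deriv_est z y w w' : RootP z w -> RootP y w' ->
  Cmod (w' - w - (y - z) * lder w) * (1 - Cmod w)^3 <= 81/4 * (Cmod (y - z) * Cmod (y - z)).
Proof.
  intros [Ew Lw] [Ew' Lw'].
  set (h := (y - z)%C). set (D := (w' - w)%C).
  assert (Id1 : (D * (w * w' - 1) = RtoC 9 / RtoC 2 * h * w * w')%C).
  { replace (D * (w * w' - 1))%C with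
      ((U y - U z) * w * w' + w * (w' * w' - U y * w' + 1) - w' * (w * w - U z * w + 1))%C
      by (unfold D; ring).
    rewrite Ew, Ew'. unfold U, h. field. }
  assert (Hw2 : (w * w - 1)%C <> 0).
  { intro E. assert (w * w = 1)%C by (replace (w*w)%C with ((w*w - 1) + 1)%C by ring; rewrite E; ring).
    apply (f_equal Cmod) in H. rewrite Cmod_mult, Cmod_1 in H.
    pose proof (Cmod_ge_0 w). nra. }
  assert (Hl : (h * lder w * (w * w - 1) = RtoC 9 / RtoC 2 * h * w * w)%C).
  { unfold lder. field. auto. }
  set (E := (w' - w - h * lder w)%C).
  assert (Id2 : (E * (w * w' - 1) * (w * w - 1) = - (RtoC 9 / RtoC 2) * h * w * D)%C).
  { replace (E * (w * w' - 1) * (w * w - 1))%C with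
      (D * (w * w' - 1) * (w * w - 1) - (h * lder w * (w * w - 1)) * (w * w' - 1))%C
      by (unfold E, D; ring).
    rewrite Id1, Hl. unfold D. ring. }
  assert (C92 : Cmod (RtoC 9 / RtoC 2) = 9/2).
  { rewrite Cmod_div, !Cmod_R, !Rabs_right; try lra. intro H. apply (f_equal Re) in H. simpl in H. lra. }
  apply (f_equal Cmod) in Id1. apply (f_equal Cmod) in Id2.
  rewrite !Cmod_mult, C92 in Id1.
  rewrite !Cmod_mult, Cmod_opp, C92 in Id2.
  pose proof (Cmod_sub1 (w * w')). pose proof (Cmod_sub1 (w * w)).
  rewrite Cmod_mult in H, H0.
  set (nw := Cmod w) in *. set (nw' := Cmod w') in *. set (nh := Cmod h) in *.
  set (nD := Cmod D) in *. set (nE := Cmod E) in *.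
  set (nA := Cmod (w * w' - 1)) in *. set (nB := Cmod (w * w - 1)) in *.
  assert (0 <= nw) by apply Cmod_ge_0. assert (0 <= nw') by apply Cmod_ge_0.
  assert (0 <= nh) by apply Cmod_ge_0. assert (0 <= nD) by apply Cmod_ge_0.
  assert (0 <= nE) by apply Cmod_ge_0.
  assert (HA : 1 - nw <= nA) by nra.
  assert (HB : 1 - nw <= nB) by nra.
  assert (S1 : nD * (1 - nw) <= 9/2 * nh).
  { apply Rle_trans with (nD * nA). apply Rmult_le_compat_l; lra.
    rewrite Id1. assert (nw * nw' <= 1) by nra. nra. }
  assert (S2 : nE * (1 - nw) * (1 - nw) <= 9/2 * nh * nD).
  { apply Rle_trans with (nE * nA * nB).
    apply Rmult_le_compat; [nra|lra|apply Rmult_le_compat_l; lra|lra].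
    rewrite Id2. assert (0 <= nh * nD) by nra. nra. }
  replace ((1 - nw)^3) with ((1 - nw) * (1 - nw) * (1 - nw)) by ring.
  apply Rle_trans with (9/2 * nh * nD * (1 - nw)).
  { rewrite <- !Rmult_assoc. apply Rmult_le_compat_r; [lra|exact S2]. }
  nra.
Qed.

Lemma F_holo z : slit_domain z -> holo_at Fdef z.
Proof.
  intro Hs.
  destruct (slit_open z Hs) as [d [Hd Hopen]].
  assert (Hw : RootP z (Fdef z)) by (apply F_root, root_exists, Hs).
  set (w := Fdef z) in *.
  exists (lder w).
  split. apply is_linear_scal_l.
  intros x Hx. assert (Hzx : z = x) by (apply (@is_filter_lim_locally_unique C_AbsRing (AbsRing_NormedModule C_AbsRing)); exact Hx). subst x.
  intro eps.
  assert (Hw1 : 0 < 1 - Cmod w) by (destruct Hw; lra).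
  assert (Hk : 0 < eps * (1 - Cmod w)^3 * 4/81).
  { pose proof (cond_pos eps). apply Rdiv_lt_0_compat; [|lra].
    apply Rmult_lt_0_compat; [|lra]. apply Rmult_lt_0_compat; [exact H | apply pow_lt; auto]. }
  exists (mkposreal _ (Rmin_pos d _ Hd Hk)). intros y Hy.
  change (Cmod (y - z)%C < Rmin d (eps * (1 - Cmod w) ^ 3 * 4 / 81)) in Hy.
  change (Cmod ((Fdef y - w) - (y - z) * lder w)%C <= eps * Cmod (y - z)%C).
  assert (Hy1 : Cmod (y - z) < d) by (eapply Rlt_le_trans; [exact Hy| apply Rmin_l]).
  assert (Hy2 : Cmod (y - z) < eps * (1 - Cmod w)^3 * 4/81)
    by (eapply Rlt_le_trans; [exact Hy| apply Rmin_r]).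
  assert (Hwy : RootP y (Fdef y)) by (apply F_root, root_exists, Hopen, Hy1).
  pose proof (deriv_est z y w (Fdef y) Hw Hwy) as Est.
  set (nE := Cmod (Fdef y - w - (y - z) * lder w)%C) in *.
  set (nh := Cmod (y - z)%C) in *.
  set (k := (1 - Cmod w)^3) in *.
  assert (0 < k) by (unfold k; apply pow_lt; auto).
  assert (0 <= nh) by apply Cmod_ge_0.
  assert (nE * k <= eps * nh * k).
  { eapply Rle_trans. exact Est.
    assert (nh * nh <= nh * (eps * k * 4/81)) by (apply Rmult_le_compat_l; lra).
    nra. }
  apply Rmult_le_reg_r with k; auto.
Qed.

Theorem lemma3p2 (a : nat -> R) (Ha : is_S_coeffs a) :
  CV_radius a = Finite (1/9) /\
  exists F : C -> C,
    (forall z : C, slit_domain z -> holo_at F z) /\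
    (forall z : C, Cmod z < 1/9 ->
       @is_pseries C_AbsRing C_NormedModule (fun n => RtoC (a n)) z (F z)) /\
    (forall z : C, slit_domain z -> F z <> RtoC 0 /\ Cmod (F z) < 1).
Proof.
  split. apply radius; auto.
  exists Fdef. split; [|split].
  - apply F_holo.
  - intros z Hz. apply series_F; auto.
  - intros z Hz. destruct (F_root z (root_exists z Hz)) as [E L]. split; auto.
    intro H0. rewrite H0 in E.
    replace (RtoC 0 * RtoC 0 - U z * RtoC 0 + 1)%C with (RtoC 1) in E by ring.
    apply (f_equal Re) in E. simpl in E. lra.
Qed.
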